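(* Let $V$ be a vector space over a field $\mathbb F$, and let $\mathcal S=\{\tau^1,\tau^2,\tau^3,\dots\}\subset\mathcal T(V^* )$ contain exactly one symmetric tensor $\tau^n\in\odot^nV^*$ for each $n\in\mathbb N$. Then the permutation invariant subalgebra generated by $\mathcal S$ equals $$\mathcal A_{\mathrm{perm}}(\mathcal S)=\mathbb F\oplus\bigoplus_{n=1}^\infty\operatorname{span}\{\tau^{\mathbf P}:\mathbf P\in\mathbf{Part}(n)\}.$$
   Context: $\mathcal T(V^* )=\bigoplus_{n\ge0}\otimes^nV^*$, where $\otimes^nV^*$ is the space of $n$-multilinear forms $V^n\to\mathbb F$ ($\otimes^0V^*=\mathbb F$), with product $(\tau\otimes\tau')(v_1,\dots,v_{n+m})=\tau(v_1,\dots,v_n)\tau'(v_{n+1},\dots,v_{n+m})$ (scalars act by scalar multiplication). $S_n$ acts on $\otimes^nV^*$ by $(P_\sigma\tau)(v_1,\dots,v_n)=\tau(v_{\sigma^{-1}(1)},\dots,v_{\sigma^{-1}(n)})$; $\odot^nV^*$ is the subspace of tensors fixed by all $P_\sigma$. A unital subalgebra is a linear subspace containing $\mathbb F$ and closed under $\otimes$; it is graded if it is the direct sum of its intersections $\mathcal A_n$ with the $\otimes^nV^*$, and permutation invariant if it is graded and each $\mathcal A_n$ is preserved by $S_n$. $\mathcal A_{\mathrm{perm}}(\mathcal S)$ is the intersection of all permutation invariant unital subalgebras containing $\mathcal S$. $\mathbf{Part}(n)$ is the set of partitions $\mathbf P=\{P_1,\dots,P_r\}$ of $\{1,\dots,n\}$;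 for such $\mathbf P$ with $n_i=|P_i|$, $\tau^{\mathbf P}(v_1,\dots,v_n)=\prod_{i=1}^r\tau^{n_i}\big((v_j)_{j\in P_i}\big)$ (independent of the order within $P_i$ by symmetry). *)

(* Defs.v *)
From HB Require Import structures.
From mathcomp Require Import all_boot all_order all_fingroup all_algebra.
Set Implicit Arguments. Unset Strict Implicit. Unset Printing Implicit Defensive.
Import GRing.Theory.
Local Open Scope ring_scope.

Section Tensors.
Variables (F : fieldType) (V : lmodType F).

Definition nform (n : nat) := ('I_n -> V) -> F.

(* an element of T(V^dual) is a family of n-ary forms (one per degree) *)
Definition tens := forall n : nat, nform n.

Definition multilinear (n : nat) (f : nform n) : Prop :=
  forall (i : 'I_n) (v : 'I_n -> V) (a : F) (x y : V),
    f (fun j => if j == i then a *: x + y else v j)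
    = a * f (fun j => if j == i then x else v j)
      + f (fun j => if j == i then y else v j).

(* t lies in the direct sum \bigoplus_n \otimes^n V^dual *)
Definition is_tensor (t : tens) : Prop :=
  (forall n, multilinear (t n)) /\
  exists N : nat, forall n, (N <= n)%N -> forall v, t n v = 0.

Definition ext (m : nat) (v : 'I_m -> V) (j : nat) : V :=
  oapp v 0 (insub j : option 'I_m).

Definition tzero : tens := fun n v => 0.
Definition tadd (t s : tens) : tens := fun n v => t n v + s n v.
Definition tscale (a : F) (t : tens) : tens := fun n v => a * t n v.
Definition tconst (c : F) : tens := fun n v => if n is 0 then c else 0.
Definition tmul (t s : tens) : tens := fun k v =>
  \sum_(i < k.+1)
     t i (fun j : 'I_i => ext v j) * s (k - i)%N (fun j : 'I_(k - i) => ext v (i + j)%N).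

Definition thom (n : nat) (f : nform n) : tens := fun m v =>
  if m == n then f (fun j : 'I_n => ext v j) else 0.

Definition pact (n : nat) (s : 'S_n) (f : nform n) : nform n :=
  fun v => f (fun j => v ((s^-1)%g j)).

Definition sym_nform (n : nat) (f : nform n) : Prop :=
  forall s : 'S_n, pact s f = f.

Definition unital_subalg (A : tens -> Prop) : Prop :=
  (forall t, A t -> is_tensor t) /\
  A tzero /\
  (forall t s, A t -> A s -> A (tadd t s)) /\
  (forall a t, A t -> A (tscale a t)) /\
  (forall c, A (tconst c)) /\
  (forall t s, A t -> A s -> A (tmul t s)).

Definition graded (A : tens -> Prop) : Prop :=
  forall t, A t -> forall n, A (thom (t n)).

Definition perm_invariant (A : tens -> Prop) : Prop :=
  unital_subalg A /\ graded A /\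
  forall t, A t -> forall n (s : 'S_n), A (thom (pact s (t n))).

Definition A_perm (S : tens -> Prop) : tens -> Prop := fun t =>
  forall A, perm_invariant A -> (forall u, S u -> A u) -> A t.

Definition tauP (tau : forall n, nform n) (n : nat) (P : {set {set 'I_n}}) : nform n :=
  fun v => \prod_(B in P) tau #|B| (fun j : 'I_#|B| => v (enum_val j)).

Definition partition_span (tau : forall n, nform n) : tens -> Prop := fun t =>
  is_tensor t /\
  forall n, (0 < n)%N ->
    exists c : {set {set 'I_n}} -> F,
      t n = fun v => \sum_(P : {set {set 'I_n}} | partition P [set: 'I_n])
                        c P * tauP tau P v.

End Tensors.

(* Main.v *)
Require Import Defs.
From HB Require Import structures.
From mathcomp Require Import all_boot all_order all_fingroup all_algebra.
From Stdlib Require Import FunctionalExtensionality.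
From mathcomp Require Import zify ring.
Set Implicit Arguments. Unset Strict Implicit. Unset Printing Implicit Defensive.
Import GRing.Theory.
Local Open Scope ring_scope.

Section S.
Variables (F : fieldType) (V : lmodType F).

Definition ev (n : nat) (B : {set 'I_n}) : 'I_#|B| -> 'I_n := fun j => enum_val j.
Arguments ev {n} B j.

Lemma tauPE (tau : forall n, nform V n) n (P : {set {set 'I_n}}) v :
  tauP tau P v = \prod_(B in P) tau #|B| (fun j => v (ev B j)).
Proof. by []. Qed.

Lemma ev_inj n (B : {set 'I_n}) : injective (ev B).
Proof. exact: enum_val_inj. Qed.

Lemma ev_img n (B : {set 'I_n}) : ev B @: setT = B.
Proof.
apply/setP => x; apply/imsetP/idP => [[j _ ->]|Hx]; first exact: enum_valP.
by exists (enum_rank_in Hx x); rewrite // /ev enum_rankK_in.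
Qed.

Lemma extE m (v : 'I_m -> V) (j : 'I_m) : ext v j = v j.
Proof. by rewrite /ext valK. Qed.

Lemma extE' m (v : 'I_m -> V) j (H : (j < m)%N) : ext v j = v (Ordinal H).
Proof. by rewrite /ext insubT. Qed.

Lemma ext_comp (G : nat -> V) i j : (j < i)%N -> ext (fun j' : 'I_i => G j') j = G j.
Proof. by move=> H; rewrite (extE' _ H). Qed.

Lemma thomE n (f : nform V n) : (thom f : tens V) n = f.
Proof.
apply: functional_extensionality => v; rewrite /thom eqxx; congr f.
by apply: functional_extensionality => j; rewrite extE.
Qed.

Lemma nform0_eq (f : nform V 0) v w : f v = f w.
Proof. by congr f; apply: functional_extensionality => -[]. Qed.

Lemma reindex (tau : forall n, nform V n)
  (hsym : forall n, (0 < n)%N -> sym_nform (tau n)) n k1 k2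
  (e1 : 'I_k1 -> 'I_n) (e2 : 'I_k2 -> 'I_n) (v : 'I_n -> V) :
  injective e1 -> injective e2 -> e1 @: setT = e2 @: setT ->
  tau k1 (fun j => v (e1 j)) = tau k2 (fun j => v (e2 j)).
Proof.
move=> i1 i2 eqI.
have ek : k1 = k2.
  by move: (card_imset setT i1) (card_imset setT i2); rewrite eqI !cardsT !card_ord => -> .
subst k2.
have /fin_all_exists [s Hs] : forall j, exists j', e1 j' = e2 j.
  move=> j; have : e2 j \in e1 @: setT by rewrite eqI imset_f.
  by case/imsetP => j' _ ->; exists j'.
have sinj : injective s by move=> a b H; apply: i2; rewrite -!Hs H.
case: k1 e1 e2 i1 i2 eqI s Hs sinj => [|k] e1 e2 i1 i2 eqI s Hs sinj.
  by congr (tau 0); apply: functional_extensionality => -[].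
have := hsym k.+1 isT ((perm sinj)^-1)%g.
move/(congr1 (fun f => f (fun j => v (e1 j)))); rewrite /pact invgK => <-.
by congr (tau _); apply: functional_extensionality => j; rewrite permE Hs.
Qed.


Lemma tens_ext (t s : tens V) : (forall d v, t d v = s d v) -> t = s.
Proof.
move=> H; apply: functional_extensionality_dep => d.
by apply: functional_extensionality => v; apply: H.
Qed.

Lemma tmul_thom a b n (H : (a + b)%N = n) (f : nform V a) (g : nform V b) :
  tmul (thom f) (thom g) =
  thom (fun w : 'I_n -> V => f (fun j : 'I_a => ext w j) * g (fun j : 'I_b => ext w (a + j))).
Proof.
apply: tens_ext => d v; rewrite /tmul.
pose T := f (fun j : 'I_a => ext v j) *
   (if (d - a)%N == b then g (fun j : 'I_b => ext v (a + j)) else 0).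
rewrite (eq_bigr (fun i : 'I_d.+1 => if (i : nat) == a then T else 0)); last first.
  move=> i _; rewrite /thom /T; case: eqP => [Ea|_]; last by rewrite mul0r.
  congr (_ * _).
    by congr f; apply: functional_extensionality => j; rewrite ext_comp // Ea.
  move: (valP i); rewrite Ea => Hi.
  case: eqP => Eb; last by [].
  congr g; apply: functional_extensionality => j.
  by rewrite (ext_comp (fun x => ext v (a + x))) // Eb.
rewrite -big_mkcond (big_ord1_eq _ (fun _ => T)) /thom /T.
case: (d =P n) => [Ed|Nd].
  subst d.
  have Ha : (a <= n)%N by rewrite -H leq_addr.
  have Hb : (n - a)%N = b by rewrite -H addKn.
  rewrite ltnS Ha Hb eqxx; congr (_ * _).
    congr f; apply: functional_extensionality => j.
    by rewrite (ext_comp (ext v)) //; apply: leq_trans Ha.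
  congr g; apply: functional_extensionality => j.
  by rewrite (ext_comp (ext v)) //; have := ltn_ord j; lia.
case: ifP => // Ha; case: eqP; last by rewrite mulr0.
by move=> Eb; exfalso; apply: Nd; rewrite -H -Eb subnKC // -ltnS.
Qed.


Unset Implicit Arguments.
Section Tau.
Variable (tau : forall n, nform V n).
Hypothesis hlin : forall n, (0 < n)%N -> multilinear (tau n).
Hypothesis hsym : forall n, (0 < n)%N -> sym_nform (tau n).

Lemma tauP_ml n (P : {set {set 'I_n}}) : partition P [set: 'I_n] -> multilinear (tauP tau P).
Proof.
move=> pP i v a x y.
have covP := cover_partition pP; have tP := partition_trivIset pP.
set B0 := pblock P i.
have B0P : B0 \in P by apply: pblock_mem; rewrite covP inE.
have iB0 : i \in B0 by rewrite mem_pblock covP inE.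
have rest X : \prod_(B in P | B != B0)
     tau #|B| (fun j => (fun j0 => if j0 == i then X else v j0) (ev B j))
   = \prod_(B in P | B != B0) tau #|B| (fun j => v (ev B j)).
  apply: eq_bigr => B /andP [BP nB]; congr (tau _).
  apply: functional_extensionality => j /=; case: eqP => // Ej.
  exfalso; move/negP: nB; apply; apply/eqP; rewrite /B0 -Ej.
  by rewrite (def_pblock tP BP) // /ev enum_valP.
set i' := enum_rank_in iB0 i.
have E X : (fun j => (fun j0 => if j0 == i then X else v j0) (ev B0 j))
         = (fun j => if j == i' then X else v (ev B0 j)).
  apply: functional_extensionality => j /=.
  have -> : (ev B0 j == i) = (j == i').
    by rewrite -{1}(enum_rankK_in iB0 iB0) (inj_eq (@ev_inj _ B0)).
  by case: eqP.
have k0 : (0 < #|B0|)%N by apply/card_gt0P; exists i.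
rewrite !tauPE !(bigD1 B0 B0P) /= !rest !E (hlin _ k0); ring.
Qed.


Definition inspan n (f : nform V n) : Prop :=
  exists c : {set {set 'I_n}} -> F,
    f = fun v => \sum_(P : {set {set 'I_n}} | partition P [set: 'I_n]) c P * tauP tau P v.
Arguments inspan {n} f.

Lemma inspan_tauP n (R : {set {set 'I_n}}) : partition R [set: 'I_n] -> inspan (tauP tau R).
Proof.
move=> pR; exists (fun P => (P == R)%:R); apply: functional_extensionality => v.
rewrite (bigD1 R) //= eqxx mul1r big1 ?addr0 // => P /andP [_ /negbTE ->].
by rewrite mul0r.
Qed.

Lemma inspan_zero n : inspan (fun _ : 'I_n -> V => 0).
Proof.
exists (fun _ => 0); apply: functional_extensionality => v.
by rewrite big1 // => P _; rewrite mul0r.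
Qed.

Lemma inspan_add n (f g : nform V n) : inspan f -> inspan g -> inspan (fun v => f v + g v).
Proof.
move=> [c ->] [d ->]; exists (fun P => c P + d P); apply: functional_extensionality => v.
by rewrite -big_split /=; apply: eq_bigr => P _; rewrite mulrDl.
Qed.

Lemma inspan_scale n a (f : nform V n) : inspan f -> inspan (fun v => a * f v).
Proof.
move=> [c ->]; exists (fun P => a * c P); apply: functional_extensionality => v.
by rewrite mulr_sumr; apply: eq_bigr => P _; rewrite mulrA.
Qed.

Lemma inspan_sum n (I : Type) (r : seq I) (p : pred I) (G : I -> nform V n) :
  (forall i, p i -> inspan (G i)) -> inspan (fun v => \sum_(i <- r | p i) G i v).
Proof.
move=> HG; elim: r => [|x r IH].
  have -> : (fun v => \sum_(i <- [::] | p i) G i v) = (fun _ => 0).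
    by apply: functional_extensionality => v; rewrite big_nil.
  exact: inspan_zero.
have -> : (fun v => \sum_(i <- x :: r | p i) G i v) =
   (fun v => if p x then G x v + \sum_(i <- r | p i) G i v else \sum_(i <- r | p i) G i v).
  by apply: functional_extensionality => v; rewrite big_cons.
case Px: (p x); last by [].
by apply: inspan_add => //; apply: HG.
Qed.

Lemma inspan_ml n (f : nform V n) : inspan f -> multilinear f.
Proof.
move=> [c ->] i v a x y.
rewrite mulr_sumr -big_split /=; apply: eq_bigr => P pP.
by rewrite (tauP_ml _ _ pP); ring.
Qed.

Lemma setT_I0 : [set: 'I_0] = set0.
Proof. by apply/setP => -[]. Qed.

Lemma inspan0_all (f : nform V 0) : inspan f.
Proof.
exists (fun _ => f (fun _ => 0)); apply: functional_extensionality => v.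
rewrite (bigD1 set0) /=; last by rewrite setT_I0 partition_set0.
rewrite big1 ?addr0.
  by rewrite tauPE big_set0 mulr1; apply: nform0_eq.
by move=> P /andP [pP nP]; exfalso; move: pP; rewrite setT_I0 partition_set0 (negbTE nP).
Qed.


Lemma tauP_img m n (g : 'I_m -> 'I_n) (P : {set {set 'I_m}}) v :
  injective g ->
  tauP tau P (fun j => v (g j)) = tauP tau [set g @: (B : {set 'I_m}) | B in P] v.
Proof.
move=> ig; rewrite !tauPE big_imset /=; last by move=> B1 B2 _ _; apply: imset_inj.
apply: eq_bigr => B _.
apply: (reindex hsym (e1 := fun j => g (ev B j)) (e2 := ev (g @: B))).
- by move=> x y /ig /ev_inj.
- exact: ev_inj.
by rewrite ev_img imset_comp ev_img.
Qed.

Lemma tau_single k v : tauP tau [set [set: 'I_k]] v = tau k v.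
Proof.
rewrite tauPE big_set1.
apply: (reindex hsym (e1 := ev [set: 'I_k]) (e2 := id)).
- exact: ev_inj.
- by [].
by rewrite ev_img imset_id.
Qed.


Lemma perm_imsetT n (s : 'S_n) : s @: setT = setT.
Proof.
apply/setP => x; rewrite inE; apply/imsetP; exists ((s^-1)%g x); first by rewrite inE.
by rewrite permKV.
Qed.

Lemma imset_preimset_sub m n (e : 'I_m -> 'I_n) (D : {set 'I_n}) :
  D \subset e @: setT -> e @: (e @^-1: D) = D.
Proof.
move=> sD; apply/setP => x; apply/imsetP/idP => [[j]|xD].
  by rewrite inE => jD ->.
by have /imsetP [j _ Ej] := subsetP sD x xD; exists j => //; rewrite inE -Ej.
Qed.

Lemma partitionU2 (T : finType) (P1 P2 : {set {set T}}) D1 D2 :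
  partition P1 D1 -> partition P2 D2 -> [disjoint D1 & D2] ->
  partition (P1 :|: P2) (D1 :|: D2).
Proof.
move=> p1 p2 dD.
rewrite /partition inE negb_or (partition0 p1) (partition0 p2) andbT.
rewrite /cover bigcup_setU -/(cover P1) -/(cover P2).
rewrite (cover_partition p1) (cover_partition p2) eqxx /=.
apply: trivIsetU; rewrite ?(partition_trivIset p1) ?(partition_trivIset p2) //.
by rewrite (cover_partition p1) (cover_partition p2).
Qed.


Set Implicit Arguments.
Lemma disjI (T : finType) (A B : {set T}) :
  (forall x, x \in A -> x \in B -> False) -> [disjoint A & B].
Proof.
move=> H; apply/pred0P => x /=; apply/negP => /andP [xA xB]; exact: H x xA xB.
Qed.

Lemma part_disj (T : finType) (P1 P2 : {set {set T}}) D1 D2 :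
  partition P1 D1 -> partition P2 D2 -> [disjoint D1 & D2] -> [disjoint P1 & P2].
Proof.
move=> p1 p2 dD; apply: disjI => X X1 X2.
have /set0Pn [x xX] := partition_neq0 p1 X1.
by move: (disjointFr dD (subsetP (partitionS p1 X1) x xX)); rewrite (subsetP (partitionS p2 X2) x xX).
Qed.

Lemma lo_proof a b n (H : (a + b)%N = n) (j : 'I_a) : (j < n)%N.
Proof. by rewrite -H; apply: ltn_addr. Qed.
Lemma ro_proof a b n (H : (a + b)%N = n) (j : 'I_b) : (a + j < n)%N.
Proof. by rewrite -H ltn_add2l. Qed.
Definition lo a b n (H : (a + b)%N = n) (j : 'I_a) : 'I_n := Ordinal (lo_proof H j).
Definition ro a b n (H : (a + b)%N = n) (j : 'I_b) : 'I_n := Ordinal (ro_proof H j).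

Lemma lo_inj a b n (H : (a + b)%N = n) : injective (lo H).
Proof. by move=> x y /(congr1 val) /= /val_inj. Qed.
Lemma ro_inj a b n (H : (a + b)%N = n) : injective (ro H).
Proof. by move=> x y /(congr1 val) /= /addnI /val_inj. Qed.

Lemma lo_ro_disj a b n (H : (a + b)%N = n) : [disjoint lo H @: setT & ro H @: setT].
Proof.
apply: disjI => x /imsetP [j _ ->] /imsetP [k _ /(congr1 val) /= E].
by have := ltn_ord j; rewrite E ltnNge leq_addr.
Qed.

Lemma lo_ro_cover a b n (H : (a + b)%N = n) : lo H @: setT :|: ro H @: setT = setT.
Proof.
apply/setP => x; rewrite !inE; case: (ltnP x a) => xa.
  by apply/orP; left; apply/imsetP; exists (Ordinal xa) => //; apply: val_inj.
have xb : (x - a < b)%N by have := ltn_ord x; lia.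
by apply/orP; right; apply/imsetP; exists (Ordinal xb) => //; apply: val_inj => /=; lia.
Qed.

Definition comb a b n (H : (a + b)%N = n) (P : {set {set 'I_a}}) (Q : {set {set 'I_b}}) :
  {set {set 'I_n}} :=
  [set lo H @: (B : {set 'I_a}) | B in P] :|: [set ro H @: (C : {set 'I_b}) | C in Q].

Lemma comb_part a b n (H : (a + b)%N = n) P Q :
  partition P [set: 'I_a] -> partition Q [set: 'I_b] -> partition (comb H P Q) [set: 'I_n].
Proof.
move=> pP pQ; rewrite -(lo_ro_cover H); apply: partitionU2; last exact: lo_ro_disj.
  by rewrite imset_partition //; apply: lo_inj.
by rewrite imset_partition //; apply: ro_inj.
Qed.

Lemma comb_eq a b n (H : (a + b)%N = n) P Q w :
  partition P [set: 'I_a] -> partition Q [set: 'I_b] ->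
  tauP tau (comb H P Q) w =
  tauP tau P (fun j : 'I_a => ext w j) * tauP tau Q (fun j : 'I_b => ext w (a + j)).
Proof.
move=> pP pQ.
have p1 : partition [set lo H @: (B : {set 'I_a}) | B in P] (lo H @: setT).
  by rewrite imset_partition //; apply: lo_inj.
have p2 : partition [set ro H @: (B : {set 'I_b}) | B in Q] (ro H @: setT).
  by rewrite imset_partition //; apply: ro_inj.
rewrite /comb tauPE.
rewrite (eq_bigl [predU [set lo H @: (B : {set 'I_a}) | B in P] &
                  [set ro H @: (C : {set 'I_b}) | C in Q]]); last by move=> X; rewrite !inE.
rewrite bigU /=; last exact: part_disj p1 p2 (lo_ro_disj H).
have -> : (fun j : 'I_a => ext w j) = (fun j => w (lo H j)).
  by apply: functional_extensionality => j; exact: (extE w (lo H j)).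
have -> : (fun j : 'I_b => ext w (a + j)) = (fun j => w (ro H j)).
  by apply: functional_extensionality => j; exact: (extE w (ro H j)).
rewrite (tauP_img _ _ _ P w (@lo_inj _ _ _ H)) (tauP_img _ _ _ Q w (@ro_inj _ _ _ H)).
by [].
Qed.


Lemma inspan_eq n (f g : nform V n) : (forall v, f v = g v) -> inspan g -> inspan f.
Proof. by move=> E; have -> : f = g by apply: functional_extensionality. Qed.

Lemma inspan_mul a b n (H : (a + b)%N = n) (f : nform V a) (g : nform V b) :
  inspan f -> inspan g ->
  inspan (fun w : 'I_n -> V => f (fun j : 'I_a => ext w j) * g (fun j : 'I_b => ext w (a + j))).
Proof.
move=> [c ->] [d ->].
apply: (@inspan_eq _ _ (fun w => \sum_(P : {set {set 'I_a}} | partition P [set: 'I_a])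
    \sum_(Q : {set {set 'I_b}} | partition Q [set: 'I_b]) (c P * d Q) * tauP tau (comb H P Q) w)).
  move=> w; rewrite big_distrlr /=; apply: eq_bigr => P pP; apply: eq_bigr => Q pQ.
  by rewrite comb_eq //; ring.
apply: inspan_sum => P pP; apply: inspan_sum => Q pQ; apply: inspan_scale.
by apply: inspan_tauP; apply: comb_part.
Qed.

Lemma inspan_pact n (s : 'S_n) (f : nform V n) : inspan f -> inspan (pact s f).
Proof.
move=> [c ->].
apply: (@inspan_eq _ _ (fun v => \sum_(P : {set {set 'I_n}} | partition P [set: 'I_n])
    c P * tauP tau [set (s^-1)%g @: (B : {set 'I_n}) | B in P] v)).
  move=> v; rewrite /pact; apply: eq_bigr => P _.
  by rewrite (tauP_img _ _ _ P v (@perm_inj _ (s^-1)%g)).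
apply: inspan_sum => P pP; apply: inspan_scale; apply: inspan_tauP.
by rewrite -(perm_imsetT _ (s^-1)%g) imset_partition //; apply: perm_inj.
Qed.


Lemma ps_iff (t : tens V) : partition_span tau t <->
  ((exists N, forall n, (N <= n)%N -> forall v, t n v = 0) /\ forall n, inspan (t n)).
Proof.
split.
  move=> [[_ HN] Hs]; split => // n; case: n => [|n]; first exact: inspan0_all.
  exact: Hs.
move=> [HN Hs]; split; last by move=> n _; exact: Hs.
by split => // n; apply: inspan_ml.
Qed.

Lemma ps_thom n (f : nform V n) : inspan f -> partition_span tau (thom f).
Proof.
move=> Hf; apply/ps_iff; split.
  exists n.+1 => m Hm v; rewrite /thom; case: eqP => // E; exfalso; lia.
move=> m; have [->|ne] := eqVneq m n; first by rewrite thomE.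
apply: (@inspan_eq _ _ (fun _ => 0)); last exact: inspan_zero.
by move=> v; rewrite /thom (negbTE ne).
Qed.

Lemma part_single n : (0 < n)%N -> partition [set [set: 'I_n]] [set: 'I_n].
Proof.
move=> n0; rewrite /partition cover1 eqxx trivIset1 /= inE.
apply/eqP => /setP /(_ (Ordinal n0)); by rewrite !inE.
Qed.

Lemma inspan_tau n : (0 < n)%N -> inspan (tau n).
Proof.
move=> n0; apply: (@inspan_eq _ _ (tauP tau [set [set: 'I_n]])).
  by move=> v; rewrite tau_single.
exact: inspan_tauP (part_single n0).
Qed.

Lemma ps_perm_inv : perm_invariant (partition_span tau).
Proof.
split; last split.
- split; first by move=> t [].
  split; first by apply/ps_iff; split; [exists 0%N | move=> n; exact: inspan_zero].
  split.
    move=> t s /ps_iff [[N1 h1] s1] /ps_iff [[N2 h2] s2]; apply/ps_iff; split.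
      exists (maxn N1 N2) => n Hn v; rewrite /tadd h1 ?h2 ?addr0 //.
        by apply: leq_trans Hn; apply: leq_maxr.
      by apply: leq_trans Hn; apply: leq_maxl.
    by move=> n; apply: inspan_add.
  split.
    move=> a t /ps_iff [[N1 h1] s1]; apply/ps_iff; split.
      by exists N1 => n Hn v; rewrite /tscale h1 ?mulr0.
    by move=> n; apply: inspan_scale.
  split.
    move=> c; apply/ps_iff; split; first by exists 1%N => -[|n] //.
    by case=> [|n]; [exact: inspan0_all | exact: inspan_zero].
  move=> t s /ps_iff [[N1 h1] s1] /ps_iff [[N2 h2] s2]; apply/ps_iff; split.
    exists (N1 + N2)%N => k Hk v; rewrite /tmul big1 // => i _.
    case: (ltnP i N1) => Hi; last by rewrite h1 ?mul0r.
    rewrite h2 ?mulr0 //; have := ltn_ord i; lia.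
  move=> k; apply: inspan_sum => i _; apply: inspan_mul => //.
  by rewrite subnKC // -ltnS.
- by move=> t /ps_iff [_ Hs] n; apply: ps_thom.
by move=> t /ps_iff [_ Hs] n s; apply: ps_thom; apply: inspan_pact.
Qed.

Lemma forward (t : tens V) :
  A_perm (fun u => exists2 n, (0 < n)%N & u = thom (tau n)) t -> partition_span tau t.
Proof.
move=> Ht; apply: Ht; first exact: ps_perm_inv.
by move=> u [n n0 ->]; apply: ps_thom; apply: inspan_tau.
Qed.


Lemma tbig_eval (I : Type) (r : seq I) (p : pred I) (G : I -> tens V) (d : nat) (v : 'I_d -> V) :
  (\big[@tadd F V/@tzero F V]_(i <- r | p i) G i) d v = \sum_(i <- r | p i) G i d v.
Proof. exact: (@big_morph F (tens V) (fun u : tens V => u d v) 0 +%R (@tzero F V) (@tadd F V) (fun _ _ => erefl) erefl). Qed.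

Section Back.
Variable A : tens V -> Prop.
Hypothesis hA : perm_invariant A.
Hypothesis hS : forall n, (0 < n)%N -> A (thom (tau n)).

Lemma A_big (I : Type) (r : seq I) (p : pred I) (G : I -> tens V) :
  (forall i, p i -> A (G i)) -> A (\big[@tadd F V/@tzero F V]_(i <- r | p i) G i).
Proof.
have [[_ [A0 [Aadd _]]] _] := hA.
by move=> HG; apply: (big_ind A) => //; exact: Aadd.
Qed.

Lemma A_part r n (P : {set {set 'I_n}}) :
  partition P [set: 'I_n] -> #|P| = r -> A (thom (tauP tau P)).
Proof.
have [[_ [A0 [Aadd [Ascale [Aconst Amul]]]]] [Agr Apact]] := hA.
elim: r n P => [|r IH] n P pP cP.
  move/cards0_eq: cP => P0; subst P.
  have n0 : n = 0%N.
    move: pP; rewrite /partition /cover big_set0 => /andP [/eqP E _].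
    case: n E => // n E; have := in_setT (@ord0 n); by rewrite -E inE.
  suff -> : thom (tauP tau (set0 : {set {set 'I_n}})) = tconst 1 by apply: Aconst.
  apply: tens_ext => -[|d] v; rewrite /thom /tconst.
    by case: eqP => // E; [rewrite tauPE big_set0 | exfalso; apply: E].
  by case: eqP => // E; exfalso; lia.
have /set0Pn [B BP] : P != set0 by rewrite -card_gt0 cP.
set k := #|B|; set m := #|~: B|.
have H : (k + m)%N = n by rewrite /k /m cardsC card_ord.
set eB := ev B; set eC := ev (~: B).
have q1 : forall D, D \in P :\ B -> D \subset eC @: setT.
  move=> D HD; rewrite ev_img -setTD; exact: partitionS (partitionD1 pP BP) HD.
set Q := [set eC @^-1: (D : {set 'I_n}) | D in P :\ B].
have q2 : [set eC @: (C : {set 'I_m}) | C in Q] = P :\ B.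
  rewrite /Q -imset_comp -[RHS]imset_id; apply: eq_in_imset => D HD /=.
  exact: imset_preimset_sub (q1 D HD).
have pQ : partition Q [set: 'I_m].
  rewrite -(imset_partition _ _ (@ev_inj _ (~: B))) -/eC q2 ev_img -setTD.
  exact: partitionD1.
have cQ : #|Q| = r.
  rewrite card_in_imset.
    by have := cardsD1 B P; rewrite BP cP add1n => -[].
  move=> D1 D2 H1 H2 E.
  by rewrite -(imset_preimset_sub _ _ _ _ (q1 _ H1)) -(imset_preimset_sub _ _ _ _ (q1 _ H2)) E.
have IHQ := IH m Q pQ cQ.
have k0 : (0 < k)%N by rewrite card_gt0; exact: partition_neq0 pP BP.
have AR := Amul _ _ (hS k0) IHQ; rewrite (tmul_thom H) in AR.
set R := comb H [set [set: 'I_k]] Q.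
have hR : (fun w : 'I_n -> V => tau k (fun j : 'I_k => ext w j) *
            tauP tau Q (fun j : 'I_m => ext w (k + j))) = tauP tau R.
  apply: functional_extensionality => w.
  by rewrite /R comb_eq ?tau_single //; exact: part_single k0.
rewrite hR in AR.
have eBin j : eB j \in B by exact: enum_valP.
have eCin j : eC j \in ~: B by exact: enum_valP.
pose g (i : 'I_n) : 'I_n :=
  match split (cast_ord (esym H) i) with inl j => eB j | inr j => eC j end.
have ginj : injective g.
  move=> i1 i2; rewrite /g.
  case E1: (split _) => [j1|j1]; case E2: (split _) => [j2|j2] => E.
  - move/ev_inj: E => Ej; apply: (cast_ord_inj (eq_n := esym H)).
    by rewrite -(splitK (cast_ord _ i1)) -(splitK (cast_ord _ i2)) E1 E2 Ej.
  - by have := eCin j2; rewrite -E inE eBin.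
  - by have := eCin j1; rewrite E inE eBin.
  - move/ev_inj: E => Ej; apply: (cast_ord_inj (eq_n := esym H)).
    by rewrite -(splitK (cast_ord _ i1)) -(splitK (cast_ord _ i2)) E1 E2 Ej.
pose t := perm ginj.
have tlo j : t (lo H j) = eB j.
  rewrite permE /g.
  have -> : cast_ord (esym H) (lo H j) = @unsplit k m (inl j) by apply: val_inj.
  by rewrite unsplitK.
have tro j : t (ro H j) = eC j.
  rewrite permE /g.
  have -> : cast_ord (esym H) (ro H j) = @unsplit k m (inr j) by apply: val_inj.
  by rewrite unsplitK.
have EP : pact (t^-1)%g (tauP tau R) = tauP tau P.
  apply: functional_extensionality => v; rewrite /pact invgK.
  rewrite (tauP_img _ _ _ R v (@perm_inj _ t)).
  suff -> : [set t @: (X : {set 'I_n}) | X in R] = P by [].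
  rewrite /R /comb imsetU !imset_set1.
  have e1 : t @: (lo H @: setT) = B.
    rewrite -imset_comp -[RHS]ev_img; apply: eq_imset => j /=; exact: tlo.
  have e2 : [set t @: (X : {set 'I_n}) | X in [set ro H @: (C : {set 'I_m}) | C in Q]]
          = [set eC @: (C : {set 'I_m}) | C in Q].
    rewrite -imset_comp; apply: eq_imset => C /=.
    rewrite -imset_comp; apply: eq_imset => j /=; exact: tro.
  by rewrite e1 e2 q2 setD1K.
have := Apact _ AR n (t^-1)%g; rewrite thomE EP; exact.
Qed.

Lemma A_thom n (f : nform V n) : inspan f -> A (thom f).
Proof.
have [[_ [A0 [Aadd [Ascale [Aconst Amul]]]]] [Agr Apact]] := hA.
move=> [c ->].
have -> : thom (fun v => \sum_(P : {set {set 'I_n}} | partition P [set: 'I_n]) c P * tauP tau P v)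
   = \big[@tadd F V/@tzero F V]_(P : {set {set 'I_n}} | partition P [set: 'I_n])
        tscale (c P) (thom (tauP tau P)).
  apply: tens_ext => d v; rewrite tbig_eval /thom /tscale.
  case: eqP => _ //; rewrite big1 // => P _; by rewrite mulr0.
apply: A_big => P pP; apply: Ascale; exact: (@A_part #|P|).
Qed.

Lemma backward (t : tens V) : partition_span tau t -> A t.
Proof.
move/ps_iff => [[N HN] Hs].
have -> : t = \big[@tadd F V/@tzero F V]_(i < N) thom (t i).
  apply: tens_ext => d v; rewrite tbig_eval.
  rewrite (eq_bigr (fun i : 'I_N => if (i : nat) == d then t d v else 0)); last first.
    move=> i _; rewrite /thom eq_sym; case: eqP => // Ed; subst d.
    by congr (t _); apply: functional_extensionality => j; rewrite extE.
  rewrite -big_mkcond (big_ord1_eq _ (fun _ => t d v)).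
  by case: ltnP => // Hd; rewrite HN.
by apply: A_big => i _; apply: A_thom.
Qed.

End Back.
End Tau.
End S.

Unset Implicit Arguments.
Theorem proposition2p9 (F : fieldType) (V : lmodType F)
  (tau : forall n : nat, nform V n)
  (hlin : forall n, (0 < n)%N -> multilinear (tau n))
  (hsym : forall n, (0 < n)%N -> sym_nform (tau n)) :
  forall t : tens V,
    A_perm (fun u => exists2 n, (0 < n)%N & u = thom (tau n)) t
    <-> partition_span tau t.
Proof.
move=> t; split; first exact: forward.
move=> Ht A hA hS.
apply: (backward hlin hsym hA _ Ht) => n n0; apply: hS; exists n => //.
Qed.
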